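(* For every $d \geq 2$, let $N(d)$ be the maximum number of mutually unbiased bases in $\mathbb{C}^d$ and let \[ B(d) = \inf\Big\{ h(\bm I) : h \in C_{\succeq 0}(U(d)) \text{ real-valued},\; h(\bm H) \leq 0 \text{ for all } \bm H \in H(d),\; \textstyle\int h\, d\nu = 1\Big\}. \] Then $N(d) \leq B(d)$.
   Context: $U(d)$ is the unitary group with identity $\bm I$ and Haar probability measure $\nu$. Orthonormal bases of $\mathbb{C}^d$ are mutually unbiased if for any two distinct bases $\mathcal B,\mathcal B'$ in the collection and any $\bm v\in\mathcal B$, $\bm w\in\mathcal B'$, $|\langle \bm v,\bm w\rangle| = 1/\sqrt d$. $H(d)$ is the set of unitary $\bm H$ with $|H_{ij}| = 1/\sqrt d$ for all $i,j$. A continuous $f$ on a compact group $G$ is positive definite ($f \in C_{\succeq 0}(G)$) if $\sum_{i,j=1}^n \overline{c_i} f(g_i^{-1}g_j) c_j \geq 0$ for all $n$, all $g_i \in G$ and $c_i \in \mathbb{C}$. *)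

(* Defs.v *)
From HB Require Import structures.
From mathcomp Require Import all_boot all_order all_algebra.
From mathcomp Require Import complex.
From mathcomp Require Import boolp classical_sets reals constructive_ereal ereal.
Set Implicit Arguments. Unset Strict Implicit. Unset Printing Implicit Defensive.
Import Order.TTheory GRing.Theory Num.Theory.
Local Open Scope ring_scope.
Local Open Scope complex_scope.

Section MUB.
Variable R : realType.
Local Notation C := (R[i]).

Definition unitary (d : nat) (U : 'M[C]_d) : Prop :=
  (map_mx (fun z : C => z^*) U)^T *m U = 1%:M.

Definition dotC (d : nat) (v w : 'cV[C]_d) : C :=
  \sum_(i < d) (v i 0)^* * w i 0.

Definition orthonormal_basis (d : nat) (b : 'I_d -> 'cV[C]_d) : Prop :=
  forall i j, dotC (b i) (b j) = (i == j)%:R.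

Definition mutually_unbiased (d k : nat) (B : 'I_k -> 'I_d -> 'cV[C]_d) : Prop :=
  (forall a, orthonormal_basis (B a)) /\
  (forall a b, a != b -> forall i j,
      `|dotC (B a i) (B b j)| = (sqrtC (d%:R : C))^-1).

Definition N_mub (d : nat) : \bar R :=
  ereal_sup [set (k%:R)%:E | k in [set k : nat |
     exists B : 'I_k -> 'I_d -> 'cV[C]_d, mutually_unbiased B]].

Definition hadamard (d : nat) (H : 'M[C]_d) : Prop :=
  unitary H /\ forall i j, `|H i j| = (sqrtC (d%:R : C))^-1.

Definition cont_on_U (d : nat) (f : 'M[C]_d -> R) : Prop :=
  forall U, unitary U -> forall e : R, 0 < e -> exists2 del : R, 0 < del &
    forall V, unitary V -> (forall i j, `|V i j - U i j| < del%:C) ->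
      `|f V - f U| < e.

Definition pos_def (d : nat) (h : 'M[C]_d -> R) : Prop :=
  forall (n : nat) (g : 'I_n -> 'M[C]_d) (c : 'I_n -> C),
    (forall i, unitary (g i)) ->
    0 <= \sum_(i < n) \sum_(j < n) (c i)^* * (h (invmx (g i) *m g j))%:C * c j.

(* I is the integral against the Haar probability measure nu of U(d), seen as
   a functional on continuous functions on U(d): linear, positive, normalized,
   left-invariant (by Riesz + uniqueness of Haar measure this characterizes
   f |-> \int f dnu on C(U(d))). *)
Definition haar_integral (d : nat) (I : ('M[C]_d -> R) -> R) : Prop :=
  [/\ (forall (a : R) f g, cont_on_U f -> cont_on_U g ->
          I (fun X => a * f X + g X) = a * I f + I g),
      (forall f, cont_on_U f -> (forall X, unitary X -> 0 <= f X) -> 0 <= I f),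
      I (fun _ => 1) = 1 &
      (forall f g, cont_on_U f -> unitary g -> I (fun X => f (g *m X)) = I f)].

Definition B_bound (d : nat) (I : ('M[C]_d -> R) -> R) : \bar R :=
  ereal_inf [set (h 1%:M)%:E | h in [set h : 'M[C]_d -> R |
     [/\ cont_on_U h, pos_def h,
         (forall H, hadamard H -> h H <= 0) & I h = 1]]].

End MUB.

(* Main.v *)
Require Import Defs.
From HB Require Import structures.
From mathcomp Require Import all_boot all_order all_algebra.
From mathcomp Require Import complex.
From mathcomp Require Import boolp classical_sets reals constructive_ereal ereal.
From mathcomp Require Import ring lra.
Set Implicit Arguments. Unset Strict Implicit. Unset Printing Implicit Defensive.
Import Order.TTheory GRing.Theory Num.Theory.
Local Open Scope ring_scope.
Local Open Scope complex_scope.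

Section Aux.
Variable R : realType.
Local Notation C := (R[i]).
Variable d : nat.
Local Notation M := ('M[C]_d).

Definition adj (U : M) : M := (map_mx (fun z : C => z^*) U)^T.

Lemma adjM (U V : M) : adj (U *m V) = adj V *m adj U.
Proof. by rewrite /adj (map_mxM conjc) trmx_mul. Qed.

Lemma adjK (U : M) : adj (adj U) = U.
Proof. by apply/matrixP=> i j; rewrite /adj !mxE conjcK. Qed.

Lemma unitary_unit (U : M) : unitary U -> U \in unitmx.
Proof. by move=> /mulmx1_unit []. Qed.

Lemma unitary_inv (U : M) : unitary U -> invmx U = adj U.
Proof.
move=> hU; have uU := unitary_unit hU.
have h2 : U *m adj U = 1%:M by apply: mulmx1C.
by rewrite -[RHS]mul1mx -(mulVmx uU) -mulmxA h2 mulmx1.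
Qed.

Lemma unitaryM (U V : M) : unitary U -> unitary V -> unitary (U *m V).
Proof.
rewrite /unitary -/(adj _) -/(adj V) -/(adj (U *m V)) => hU hV.
by rewrite adjM mulmxA -(mulmxA (adj V)) hU mulmx1 hV.
Qed.

Lemma unitary1 : unitary (1%:M : M).
Proof.
rewrite /unitary -/(adj _).
have -> : adj 1%:M = 1%:M.
  apply/matrixP=> i j; rewrite /adj !mxE.
  by rewrite conjc_nat eq_sym.
by rewrite mul1mx.
Qed.

Lemma unitary_adj (U : M) : unitary U -> unitary (adj U).
Proof.
move=> hU; rewrite /unitary -/(adj _) -/(adj (adj U)) adjK.
by apply: mulmx1C.
Qed.

Lemma unitaryV (U : M) : unitary U -> unitary (invmx U).
Proof. by move=> hU; rewrite unitary_inv //; apply: unitary_adj. Qed.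

Lemma unitary_entry (U : M) i j : unitary U -> `|U i j| <= 1.
Proof.
move=> hU.
have : (adj U *m U) j j = 1 by rewrite hU mxE eqxx.
rewrite mxE /adj => hs.
have hs' : \sum_k `|U k j| ^+ 2 = 1.
  rewrite -hs; apply: eq_bigr => k _.
  by rewrite !mxE sqr_normc mulrC.
have : `|U i j| ^+ 2 <= 1.
  rewrite -hs' (bigD1 i) //= lerDl; apply: sumr_ge0 => k _.
  exact: exprn_ge0.
apply: contraLR; rewrite -!real_ltNge ?real1 ?realE ?normr_ge0 ?exprn_ge0 ?orbT //.
move=> h; rewrite expr_gt1 // ?exprn_ge0.
Qed.

Lemma est_left (A U V : M) (e : R) i j : unitary A ->
  (forall k l, `|V k l - U k l| < e%:C) ->
  `|(A *m V) i j - (A *m U) i j| <= (d%:R * e)%:C.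
Proof.
move=> hA hVU; rewrite !mxE -sumrB.
apply: le_trans (ler_norm_sum _ _ _) _.
apply: le_trans (_ : \sum_(k < d) e%:C <= _).
  apply: ler_sum => k _; rewrite -mulrBr normrM -[e%:C]mul1r.
  by apply: ler_pM => //; [exact: unitary_entry | exact: ltW].
by rewrite sumr_const card_ord rmorphM /= rmorph_nat mulr_natl.
Qed.

Lemma est_right (B U V : M) (e : R) i j : unitary B ->
  (forall k l, `|V k l - U k l| < e%:C) ->
  `|(adj V *m B) i j - (adj U *m B) i j| <= (d%:R * e)%:C.
Proof.
move=> hB hVU; rewrite !mxE -sumrB.
apply: le_trans (ler_norm_sum _ _ _) _.
apply: le_trans (_ : \sum_(k < d) e%:C <= _).
  apply: ler_sum => k _; rewrite /adj !mxE -mulrBl -rmorphB normrM normcJ.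
  rewrite -[e%:C]mulr1.
  by apply: ler_pM => //; [exact: ltW | exact: unitary_entry].
by rewrite sumr_const card_ord rmorphM /= rmorph_nat mulr_natl.
Qed.

Lemma small_del (e : R) : 0 < e ->
  0 < e / (d%:R + 1) /\ d%:R * (e / (d%:R + 1)) < e.
Proof.
move=> he; have hd1 : 0 < d%:R + 1 :> R by rewrite ltr_wpDl.
split; first by rewrite divr_gt0.
rewrite mulrA ltr_pdivrMr // mulrC ltr_pM2l //.
by rewrite ltrDl.
Qed.

Lemma cont_left (h : M -> R) (A : M) : unitary A -> cont_on_U h ->
  cont_on_U (fun X => h (A *m X)).
Proof.
move=> hA hc U hU e he.
have [del hdel Hdel] := hc _ (unitaryM hA hU) e he.
have [hp hlt] := small_del hdel.
exists (del / (d%:R + 1)) => // V hV hVU.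
apply: Hdel; first exact: unitaryM.
move=> i j; apply: le_lt_trans (est_left i j hA hVU) _.
by rewrite ltcR.
Qed.

Lemma cont_rinv (h : M -> R) (B : M) : unitary B -> cont_on_U h ->
  cont_on_U (fun X => h (invmx X *m B)).
Proof.
move=> hB hc U hU e he.
have hUB : unitary (invmx U *m B) by apply: unitaryM => //; exact: unitaryV.
have [del hdel Hdel] := hc _ hUB e he.
have [hp hlt] := small_del hdel.
exists (del / (d%:R + 1)) => // V hV hVU.
apply: Hdel; first by apply: unitaryM => //; exact: unitaryV.
move=> i j; rewrite !unitary_inv //.
apply: le_lt_trans (est_right i j hB hVU) _.
by rewrite ltcR.
Qed.

Lemma cont_const (c : R) : cont_on_U (fun _ : M => c).
Proof. by move=> U _ e he; exists 1 => // V _ _; rewrite subrr normr0. Qed.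

Lemma cont_lin (a : R) (f g : M -> R) : cont_on_U f -> cont_on_U g ->
  cont_on_U (fun X => a * f X + g X).
Proof.
move=> hf hg U hU e he.
have he2 : 0 < e / 2 by rewrite divr_gt0.
have ha : 0 < `|a| + 1 by rewrite ltr_wpDl.
have hea : 0 < e / 2 / (`|a| + 1) by rewrite divr_gt0.
have [d1 hd1 H1] := hf U hU _ hea.
have [d2 hd2 H2] := hg U hU _ he2.
exists (Num.min d1 d2); first by rewrite lt_min hd1.
move=> V hV hVU.
have m1 : (Num.min d1 d2)%:C <= d1%:C by rewrite lecR ge_min lexx.
have m2 : (Num.min d1 d2)%:C <= d2%:C by rewrite lecR ge_min lexx orbT.
have h1 := H1 V hV (fun i j => lt_le_trans (hVU i j) m1).
have h2 := H2 V hV (fun i j => lt_le_trans (hVU i j) m2).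
have -> : a * f V + g V - (a * f U + g U) = a * (f V - f U) + (g V - g U) by ring.
apply: le_lt_trans (ler_normD _ _) _; rewrite normrM.
have : `|a| * `|f V - f U| <= e / 2.
  have : `|a| * `|f V - f U| <= (`|a| + 1) * (e / 2 / (`|a| + 1)).
    apply: ler_pM => //; first by rewrite lerDl.
    exact: ltW.
  by rewrite [(_ + 1) * _]mulrC divfK // gt_eqF.
move: h2; set x := `|a| * _; set y := `|_ - _|; lra.
Qed.

Definition ext {T} n (f : 'I_n -> T) (x : T) : 'I_n.+1 -> T :=
  fun i => match unlift ord_max i with Some i' => f i' | None => x end.

Lemma ext_w {T} n (f : 'I_n -> T) x i : ext f x (widen_ord (leqnSn n) i) = f i.
Proof.
have -> : widen_ord (leqnSn n) i = lift ord_max i by apply: val_inj; rewrite /= /bump leqNgt ltn_ord.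
by rewrite /ext liftK.
Qed.

Lemma ext_m {T} n (f : 'I_n -> T) x : ext f x ord_max = x.
Proof. by rewrite /ext unlift_none. Qed.

Lemma sum2 (F : 'I_2%N -> C) : \sum_(i < 2%N) F i = F ord0 + F ord_max.
Proof.
rewrite big_ord_recr big_ord1.
by have -> : widen_ord (leqnSn 1) ord0 = ord0 by apply: val_inj.
Qed.

Lemma sum22 (F : 'I_2%N -> 'I_2%N -> C) :
  \sum_(i < 2%N) \sum_(j < 2%N) F i j =
  F ord0 ord0 + F ord0 ord_max + (F ord_max ord0 + F ord_max ord_max).
Proof. by rewrite !sum2. Qed.

Lemma ext0 {T} (a x : T) : ext (fun _ : 'I_1 => a) x ord0 = a.
Proof. by rewrite /ext; case: unliftP. Qed.

Lemma h_sym (h : M -> R) (g : M) : pos_def h -> unitary g -> h (invmx g) = h g.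
Proof.
move=> hpd hg.
have := hpd 2%N (ext (fun _ : 'I_1 => 1%:M) g) (ext (fun _ : 'I_1 => 1) 'i).
have hu : forall i, unitary (ext (fun _ : 'I_1 => (1%:M : M)) g i).
  by move=> i; rewrite /ext; case: unlift => [_|] //; exact: unitary1.
move=> /(_ hu).
rewrite sum22 !ext0 !ext_m.
have -> : invmx g *m g = 1%:M by rewrite mulVmx // unitary_unit.
rewrite invmx1 !mul1mx mulmx1.
by move=> /ger0_Im; simpc; move=> /eqP; rewrite subr_eq0 => /eqP ->.
Qed.

Lemma cont_ext (f g : M -> R) : (forall X, f X = g X) -> cont_on_U f -> cont_on_U g.
Proof. by move=> e; rewrite (funext e). Qed.

Lemma cont_scale (a : R) (f : M -> R) : cont_on_U f -> cont_on_U (fun X => a * f X).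
Proof.
move=> hf; apply: (@cont_ext (fun X => a * f X + (fun _ => 0) X)).
  by move=> X; rewrite addr0.
by apply: cont_lin => //; exact: cont_const.
Qed.

Lemma cont_add (f g : M -> R) : cont_on_U f -> cont_on_U g -> cont_on_U (fun X => f X + g X).
Proof.
move=> hf hg; apply: (@cont_ext (fun X => 1 * f X + g X)); first by move=> X; rewrite mul1r.
exact: cont_lin.
Qed.

Lemma cont_sum n (F : 'I_n -> M -> R) : (forall i, cont_on_U (F i)) ->
  cont_on_U (fun X => \sum_(i < n) F i X).
Proof.
elim: n F => [|n IH] F hF.
  by apply: (@cont_ext (fun _ => 0)); [move=> X; rewrite big_ord0 | exact: cont_const].
apply: (@cont_ext (fun X => \sum_(i < n) F (widen_ord (leqnSn n) i) X + F ord_max X)).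
  by move=> X; rewrite big_ord_recr.
by apply: cont_add => //; apply: IH.
Qed.

Variable I : (M -> R) -> R.
Hypothesis hI : haar_integral I.

Lemma I_lin (a : R) f g : cont_on_U f -> cont_on_U g ->
  I (fun X => a * f X + g X) = a * I f + I g.
Proof. by case: hI => h _ _ _; apply: h. Qed.

Lemma I_pos f : cont_on_U f -> (forall X, unitary X -> 0 <= f X) -> 0 <= I f.
Proof. by case: hI => _ h _ _; apply: h. Qed.

Lemma I_one : I (fun _ => 1) = 1.
Proof. by case: hI. Qed.

Lemma I_inv f g : cont_on_U f -> unitary g -> I (fun X => f (g *m X)) = I f.
Proof. by case: hI => _ _ _ h; apply: h. Qed.

Lemma I_zero : I (fun _ => 0) = 0.
Proof.
have := I_lin 1 (cont_const 0) (cont_const 0).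
rewrite /= !mul1r addr0; set x := I _ => h.
by move: h; lra.
Qed.

Lemma I_const c : I (fun _ => c) = c.
Proof.
have := I_lin c (cont_const 1) (cont_const 0).
by rewrite mulr1 addr0 I_one I_zero mulr1 addr0.
Qed.

Lemma I_add f g : cont_on_U f -> cont_on_U g -> I (fun X => f X + g X) = I f + I g.
Proof.
move=> hf hg; have := I_lin 1 hf hg.
have -> : (fun X => 1 * f X + g X) = (fun X => f X + g X).
  by apply: funext => X; rewrite mul1r.
by rewrite mul1r.
Qed.

Lemma I_scale a f : cont_on_U f -> I (fun X => a * f X) = a * I f.
Proof.
move=> hf; have := I_lin a hf (cont_const 0).
have -> : (fun X => a * f X + 0) = (fun X => a * f X).
  by apply: funext => X; rewrite addr0.
by rewrite I_zero addr0.
Qed.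

Lemma I_sum n (F : 'I_n -> M -> R) : (forall i, cont_on_U (F i)) ->
  I (fun X => \sum_(i < n) F i X) = \sum_(i < n) I (F i).
Proof.
elim: n F => [|n IH] F hF.
  have -> : (fun X => \sum_(i < 0) F i X) = (fun _ => 0).
    by apply: funext => X; rewrite big_ord0.
  by rewrite I_zero big_ord0.
have -> : (fun X => \sum_(i < n.+1) F i X) =
  (fun X => (fun Y => \sum_(i < n) F (widen_ord (leqnSn n) i) Y) X + F ord_max X).
  by apply: funext => X; rewrite big_ord_recr.
rewrite I_add //; last by apply: cont_sum.
by rewrite IH // big_ord_recr.
Qed.


Variable h : M -> R.
Hypothesis hc : cont_on_U h.
Hypothesis hpd : pos_def h.

Definition Qf n (p : 'I_n -> M) (c : 'I_n -> R) :=
  \sum_(i < n) \sum_(j < n) c i * c j * h (invmx (p i) *m p j).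

Definition Ef n (p : 'I_n -> M) (c : 'I_n -> R) (s : R) (j : nat) :=
  Qf p c + 2 * s * j%:R * I h * (\sum_(i < n) c i)
  + s ^+ 2 * (j%:R * h 1%:M + j%:R * (j%:R - 1) * I h).

Lemma Qf_ge0 n (p : 'I_n -> M) c : (forall i, unitary (p i)) -> 0 <= Qf p c.
Proof.
move=> hp; have := hpd (fun i => (c i)%:C) hp.
have -> : \sum_(i < n) \sum_(j < n) ((c i)%:C)^* * (h (invmx (p i) *m p j))%:C * (c j)%:C
   = (Qf p c)%:C.
  rewrite /Qf rmorph_sum; apply: eq_bigr => i _; rewrite rmorph_sum.
  by apply: eq_bigr => j _; simpc; rewrite mulrAC.
by rewrite lecE => /andP[_].
Qed.

Lemma hsw (p x : M) : unitary p -> unitary x -> h (invmx x *m p) = h (invmx p *m x).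
Proof.
move=> hp hx.
have hu := unitaryM (unitaryV hp) hx.
rewrite -(h_sym hpd hu); congr h.
by rewrite (unitary_inv hu) (unitary_inv hp) (unitary_inv hx) adjM adjK.
Qed.

Lemma Qf_ext n (p : 'I_n -> M) c x s : (forall i, unitary (p i)) -> unitary x ->
  Qf (ext p x) (ext c s) = Qf p c + \sum_(i < n) (2 * s * c i) * h (invmx (p i) *m x)
    + s ^+ 2 * h 1%:M.
Proof.
move=> hp hx; rewrite /Qf big_ord_recr /=.
under eq_bigr => i _ do rewrite big_ord_recr /= !ext_w ext_m.
under eq_bigr => i _ do under eq_bigr => j _ do rewrite !ext_w.
rewrite big_ord_recr /= !ext_m.
under [X in _ + (X + _)]eq_bigr => j _ do rewrite ext_w ext_w hsw //.
rewrite big_split /= mulVmx ?unitary_unit //.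
have -> : \sum_(i < n) (2 * s * c i) * h (invmx (p i) *m x) =
   \sum_(i < n) c i * s * h (invmx (p i) *m x) + \sum_(i < n) s * c i * h (invmx (p i) *m x).
  by rewrite -big_split; apply: eq_bigr => i _ /=; ring.
ring.
Qed.


Lemma sum_ext n (c : 'I_n -> R) s : \sum_(i < n.+1) ext c s i = \sum_(i < n) c i + s.
Proof.
rewrite big_ord_recr ext_m; congr (_ + _).
by apply: eq_bigr => i _; rewrite ext_w.
Qed.

Lemma E_step n (p : 'I_n -> M) c s j : (forall i, unitary (p i)) ->
  (forall x, unitary x -> 0 <= Ef (ext p x) (ext c s) s j) -> 0 <= Ef p c s j.+1.
Proof.
move=> hp hE.
set K := Qf p c + s ^+ 2 * h 1%:M + 2 * s * j%:R * I h * (\sum_(i < n) c i + s)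
  + s ^+ 2 * (j%:R * h 1%:M + j%:R * (j%:R - 1) * I h).
pose F := fun x => \sum_(i < n) (2 * s * c i) * h (invmx (p i) *m x).
have cF : cont_on_U F.
  apply: cont_sum => i; apply: cont_scale; apply: cont_left => //.
  exact: unitaryV.
have cG : cont_on_U (fun x => F x + (fun _ => K) x) by apply: cont_add => //; exact: cont_const.
have hG : forall x, unitary x -> F x + K = Ef (ext p x) (ext c s) s j.
  move=> x hx; rewrite /Ef Qf_ext // sum_ext /K /F; ring.
have := I_pos cG (fun x hx => ltac:(rewrite /= hG //; exact: hE)).
rewrite I_add //; last exact: cont_const.
rewrite I_const /F I_sum; last first.
  move=> i; apply: cont_scale; apply: cont_left => //; exact: unitaryV.
under eq_bigr => i _ do rewrite (I_scale _ (cont_left (unitaryV (hp i)) hc)) (I_inv hc (unitaryV (hp i))).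
rewrite -mulr_suml -mulr_sumr /K /Ef -natr1.
by set S := \sum_(i < n) c i; set Q := Qf p c; set a := I h; set b := h 1%:M; set t := j%:R => H; nra.
Qed.


Lemma E_all s j : forall n (p : 'I_n -> M) c, (forall i, unitary (p i)) -> 0 <= Ef p c s j.
Proof.
elim: j => [|j IH] n p c hp.
  have := Qf_ge0 c hp; rewrite /Ef.
  by set Q := Qf p c; set a := I h; set b := h 1%:M; set S := \sum_(i < n) c i => H; nra.
apply: E_step => // x hx; apply: IH => i; rewrite /ext; case: unlift => //.
Qed.

Lemma key k (U : 'I_k -> M) : (forall a, unitary (U a)) ->
  (forall a b, a != b -> h (invmx (U a) *m U b) <= 0) -> I h = 1 -> k%:R <= h 1%:M.
Proof.
move=> hU hoff hI1.
case: k U hU hoff => [|k] U hU hoff.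
  have := Qf_ge0 (fun _ : 'I_1 => 1) (fun _ : 'I_1 => unitary1).
  by rewrite /Qf !big_ord1 invmx1 mul1mx !mul1r.
set kk := k.+1%:R.
have kk0 : 0 < kk by rewrite ltr0n.
have S_le : \sum_(a < k.+1) \sum_(b < k.+1) h (invmx (U a) *m U b) <= kk * h 1%:M.
  apply: le_trans (_ : \sum_(a < k.+1) h 1%:M <= _); last first.
    by rewrite sumr_const card_ord mulr_natl.
  apply: ler_sum => a _; rewrite (bigD1 a) //= mulVmx ?unitary_unit //.
  rewrite -[X in _ <= X]addr0 lerD2l; apply: sumr_le0 => b hb.
  by apply: hoff; rewrite eq_sym.
rewrite leNgt; apply/negP => hlt.
set x := h 1%:M in S_le hlt.
set y := kk * (x - 1) / (kk - x).
have hkx : 0 < kk - x by rewrite subr_gt0.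
set m := (Num.Def.archi_bound `|y|).+1.
have hm : y < m%:R.
  apply: le_lt_trans (ler_norm y) _.
  apply: lt_le_trans (archi_boundP (normr_ge0 y)) _.
  by rewrite ler_nat.
have m0 : 0 < m%:R :> R by rewrite ltr0n.
have E := E_all (- kk) m (fun _ => m%:R) hU.
have e : m%:R *+ k.+1 = m%:R * kk :> R by rewrite mulr_natr.
rewrite /Ef hI1 sumr_const card_ord e in E.
have QS : Qf U (fun _ => m%:R) =
    m%:R ^+ 2 * \sum_(a < k.+1) \sum_(b < k.+1) h (invmx (U a) *m U b).
  rewrite /Qf mulr_sumr; apply: eq_bigr => a _; rewrite mulr_sumr.
  by apply: eq_bigr => b _; rewrite expr2.
rewrite QS in E.
set S := \sum_(a < k.+1) _ in S_le E.
have H1 : m%:R ^+ 2 * S <= m%:R ^+ 2 * (kk * x) by rewrite ler_wpM2l ?exprn_ge0 ?ler0n.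
have H2 : 0 <= (kk * m%:R) * (m%:R * x - kk * m%:R + kk * x - kk).
  set t := m%:R in H1 E *; rewrite -/kk in E.
  have -> : kk * t * (t * x - kk * t + kk * x - kk) =
      t ^+ 2 * (kk * x) + 2 * - kk * t * 1 * (kk * t) + (- kk) ^+ 2 * (t * x + t * (t - 1) * 1)
    by ring.
  by move: E H1; rewrite -/x; set u := t ^+ 2 * S; set v := t ^+ 2 * (kk * x); lra.
have H3 : 0 <= m%:R * x - kk * m%:R + kk * x - kk.
  by move: H2; rewrite pmulr_rge0 // mulr_gt0.
have H4 : kk * (x - 1) < m%:R * (kk - x).
  have <- : y * (kk - x) = kk * (x - 1) by rewrite /y divfK // gt_eqF.
  by rewrite ltr_pM2r.
move: H3 H4; set t := m%:R; nra.
Qed.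

End Aux.

Section Final.
Variable R : realType.
Variable d : nat.
Local Notation C := (R[i]).
Local Notation M := ('M[C]_d).

Definition mubmx k (B : 'I_k -> 'I_d -> 'cV[C]_d) (a : 'I_k) : M :=
  \matrix_(i, j) B a j i 0.

Lemma mubmx_entry k (B : 'I_k -> 'I_d -> 'cV[C]_d) a b i j :
  (adj (mubmx B a) *m mubmx B b) i j = dotC (B a i) (B b j).
Proof.
rewrite !mxE /dotC; apply: eq_bigr => l _.
by rewrite /adj !mxE.
Qed.

End Final.

Unset Implicit Arguments.
Local Close Scope complex_scope.

Theorem corollary1p9 (R : realType) (d : nat) (hd : (2 <= d)%N)
  (I : ('M[R[i]]_d -> R) -> R) (hI : haar_integral I) :
  (N_mub R d <= B_bound I)%E.
Proof.
rewrite /N_mub /B_bound.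
apply: ge_ereal_sup => _ [k [B hB] <-].
apply: le_ereal_inf_tmp => _ [h [hc hpd hH hIh] <-].
rewrite lee_fin.
have hU : forall a, unitary (mubmx B a).
  move=> a; rewrite /unitary -/(adj _); apply/matrixP => i j.
  by rewrite mubmx_entry hB.1 mxE.
apply: (key hI hc hpd hU) => //.
move=> a b hab; apply: hH; split.
  by apply: unitaryM => //; apply: unitaryV.
by move=> i j; rewrite unitary_inv // mubmx_entry; apply: hB.2.
Qed.
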